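(* Let $k\ge 3$ and $n_1,\dots,n_k\ge 2$, and let $r\in[k]$. If $k$ is even, then $MR_{n_1,\dots,n_k}\in\mathcal{O}(K_{n_1,\dots,n_k})$. If $k$ is odd, then $MR_{n_1,\dots,n_k}\in\mathcal{O}(CS^r_{n_1,\dots,n_k})$.
   Context: All three graphs are on the same vertex set $U_1\sqcup\cdots\sqcup U_k$ with $|U_i|=n_i$. $K_{n_1,\dots,n_k}$: edges exactly between different parts. Clique-star $CS^r_{n_1,\dots,n_k}$: each $U_i$ is a clique, all vertices of $U_r$ are adjacent to all vertices of every $U_i$, $i\ne r$, and no edges between $U_i,U_l$ for distinct $i,l\ne r$. Multi-leaf repeater $MR_{n_1,\dots,n_k}$: for each $i$ a vertex $w_i\in U_i$ is adjacent to the other $n_i-1$ vertices of $U_i$ (which are leaves), and $w_1,\dots,w_k$ form a clique; no other edges. The local complement $c_v(G)$ complements the edges among the neighbours of $v$; $\mathcal{O}(G)$ is the set of graphs on $V(G)$ obtainable from $G$ by finite sequences of local complements. *)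

(* Defs.v *)
From mathcomp Require Import all_boot.
Set Implicit Arguments. Unset Strict Implicit. Unset Printing Implicit Defensive.

(* Vertex set U_1 ⊔ ... ⊔ U_k with |U_i| = n i : pairs (i, a) with a : 'I_(n i). *)
Definition vtx (k : nat) (n : 'I_k -> nat) : finType := {i : 'I_k & 'I_(n i)}.

Definition lc (T : finType) (G : rel T) (v : T) : rel T :=
  fun x y => if [&& x != y, G v x & G v y] then ~~ G x y else G x y.

Definition lc_orbit (T : finType) (G H : rel T) : Prop :=
  exists s : seq T, foldl (@lc T) G s =2 H.

Definition Kgraph (k : nat) (n : 'I_k -> nat) : rel (vtx n) :=
  fun x y => tag x != tag y.

Definition CSgraph (k : nat) (n : 'I_k -> nat) (r : 'I_k) : rel (vtx n) :=
  fun x y => if tag x == tag y then x != y else (tag x == r) || (tag y == r).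

Definition MRgraph (k : nat) (n : 'I_k -> nat) (w : forall i, 'I_(n i))
  : rel (vtx n) :=
  fun x y => if tag x == tag y
             then (x != y) && ((tagged x == w (tag x)) || (tagged y == w (tag y)))
             else (tagged x == w (tag x)) && (tagged y == w (tag y)).

(* Main.v *)
Require Import Defs.
From mathcomp Require Import all_boot zify.

Definition cv k (n : 'I_k -> nat) (w : forall i, 'I_(n i)) (j : 'I_k) : vtx n :=
  Tagged (fun i => 'I_(n i)) (w j).

Definition Gq k (n : 'I_k -> nat) (r : 'I_k) (w : forall i, 'I_(n i))
   (q : bool) (s : seq 'I_k) : rel (vtx n) := fun x y =>
  let i := tag x in let l := tag y in
  let cx := tagged x == w i in let cy := tagged y == w l in
  if i == l then
    if i == r then (x != y) && (odd (size s) == q)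
    else if i \in s then (x != y) && (cx || cy) else x != y
  else if i == r then cy || (l \notin s)
  else if l == r then cx || (i \notin s)
  else false.

Lemma eqTE k (n : 'I_k -> nat) i l (a : 'I_(n i)) (b : 'I_(n l)) :
  (Tagged (fun i => 'I_(n i)) a == Tagged (fun i => 'I_(n i)) b) =
  (i == l) && (val a == val b).
Proof.
case: (i =P l) => [E|H] /=.
  subst l. by rewrite -tag_eqE /tag_eq /= eqxx tagged_asE.
by apply/negP => /eq_tag /= E.
Qed.

Ltac ordcases k :=
  repeat match goal with
  | |- context [ @eq_op _ ?x ?y ] =>
      is_var x; is_var y;
      case: (x =P y) => ?; [subst|]
  end;
  try match goal with H : ?x <> ?x |- _ => by case: (H erefl) end.

Ltac natcases :=
  rewrite ?val_eqE;
  repeat match goal with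
  | |- context [ @eq_op _ ?x ?y ] =>
      first [is_var x | is_var y];
      case: (x =P y) => ?; [subst|]
  end;
  try match goal with H : ?x <> ?x |- _ => by case: (H erefl) end.

Ltac finish :=
  try (case: (odd _)); try (match goal with q : bool |- _ => case: q end);
  rewrite ?eqxx /= ?orbT ?orbF ?andbT ?andbF //.

Lemma step k (n : 'I_k -> nat) (r : 'I_k) (w : forall i, 'I_(n i)) q s j :
  j != r -> j \notin s ->
  lc (@Gq k n r w q s) (@cv k n w j) =2 @Gq k n r w q (rcons s j).
Proof.
move=> /eqP jr js [i a] [l b].
rewrite /lc /Gq /cv /= size_rcons /= !mem_rcons !in_cons !eqTE.
ordcases k.
all: rewrite ?(negbTE js) //=.
all: repeat match goal with |- context [?x \in ?t] => is_var t; case: (x \in t) end.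
all: natcases.
all: finish.
all: repeat match goal with H : ~ (@eq bool _ _) |- _ => move: H end; case: (odd _) => //; case: q => //.
Qed.

Lemma final k (n : 'I_k -> nat) (r : 'I_k) (w : forall i, 'I_(n i)) q s :
  (forall i, (i \in s) = (i != r)) -> odd (size s) = q ->
  lc (@Gq k n r w q s) (@cv k n w r) =2 @MRgraph k n w.
Proof.
move=> hs ho [i a] [l b].
rewrite /lc /Gq /cv /MRgraph /= !hs ho eqxx !eqTE.
ordcases k.
all: natcases.
all: finish.
Qed.

Lemma initK k (n : 'I_k -> nat) (r : 'I_k) (w : forall i, 'I_(n i)) :
  lc (@Kgraph k n) (@cv k n w r) =2 @Gq k n r w true [::].
Proof.
move=> [i a] [l b].
rewrite /lc /Gq /cv /Kgraph /= !eqTE.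
ordcases k.
all: natcases.
all: finish.
Qed.

Lemma initCS k (n : 'I_k -> nat) (r : 'I_k) (w : forall i, 'I_(n i)) :
  @CSgraph k n r =2 @Gq k n r w false [::].
Proof.
move=> [i a] [l b].
rewrite /CSgraph /Gq /= !eqTE.
ordcases k.
all: natcases.
all: finish.
Qed.

Lemma lc_ext (T : finType) (G G' : rel T) v : G =2 G' -> lc G v =2 lc G' v.
Proof. by move=> E x y; rewrite /lc !E. Qed.

Lemma foldl_ext (T : finType) (G G' : rel T) s : G =2 G' ->
  foldl (@lc T) G s =2 foldl (@lc T) G' s.
Proof.
elim: s G G' => [|v s IH] G G' E //=.
by apply: IH; apply: lc_ext.
Qed.

Lemma iter k (n : 'I_k -> nat) (r : 'I_k) (w : forall i, 'I_(n i)) q s :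
  uniq s -> r \notin s ->
  foldl (@lc _) (@Gq k n r w q [::]) (map (@cv k n w) s) =2 @Gq k n r w q s.
Proof.
elim/last_ind: s => [|s j IH] //.
rewrite rcons_uniq mem_rcons in_cons negb_or => /andP[js us] /andP[rj rs].
rewrite map_rcons foldl_rcons => x y.
rewrite (@lc_ext _ _ _ _ (IH us rs)).
by apply: step; rewrite // eq_sym.
Qed.

Theorem theorem9 (k : nat) (n : 'I_k -> nat) (r : 'I_k) (w : forall i, 'I_(n i)) :
  3 <= k -> (forall i, 2 <= n i) ->
  (~~ odd k -> lc_orbit (@Kgraph k n) (@MRgraph k n w)) /\
  (odd k -> lc_orbit (@CSgraph k n r) (@MRgraph k n w)).
Proof.
move=> hk _.
set s := [seq i <- enum 'I_k | i != r].
have us : uniq s by rewrite filter_uniq // enum_uniq.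
have hs : forall i, (i \in s) = (i != r) by move=> i; rewrite mem_filter mem_enum andbT.
have rs : r \notin s by rewrite hs eqxx.
have sz : size s = k.-1.
  have := count_predC (pred1 r) (enum 'I_k).
  rewrite size_enum_ord (count_uniq_mem _ (enum_uniq _)) mem_enum /= => E.
  have E2 : size s + 1 = k.
    rewrite size_filter. by rewrite addnC.
  apply/eqP; rewrite -(eqn_add2r 1) E2; apply/eqP; lia.
split=> ho.
  exists (@cv k n w r :: rcons (map (@cv k n w) s) (@cv k n w r)) => x y /=.
  rewrite foldl_rcons (@lc_ext _ _ _ _ (@foldl_ext _ _ _ _ (initK _ _ r w))).
  rewrite (@lc_ext _ _ _ _ (iter _ _ _ _ _ _ us rs)).
  apply: final => //.
  by rewrite sz; move: hk ho; case: (k) => // k1 _ /=; case: (odd k1).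
exists (rcons (map (@cv k n w) s) (@cv k n w r)) => x y /=.
rewrite foldl_rcons (@lc_ext _ _ _ _ (@foldl_ext _ _ _ _ (initCS _ _ r w))).
rewrite (@lc_ext _ _ _ _ (iter _ _ _ _ _ _ us rs)).
apply: final => //.
by rewrite sz; move: hk ho; case: (k) => // k1 _ /=; case: (odd k1).
Qed.
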